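(* Let $P=\langle X\mid R\rangle$ be a countably generated recursive presentation with $X=\{x_1,x_2,\dots\}$ enumerated, set $x_0$ to be the empty word, and let \[ Q=\langle X, a, b, t \mid R,\ \ t^{-1}x_{i}b^{-i}ab^{i}t=a^{-i}ba^{i}\ \text{ for all } i\ge 0\rangle . \] Then $\overline{Q}$ is torsion-free if and only if $\overline{P}$ is torsion-free.
   Context: A countably generated recursive presentation is $\langle X\mid R\rangle$ with $X$ a recursively enumerated set of generators and $R$ a recursively enumerable set of words. $\overline{P}$ denotes the group presented by $P$. *)

(* Defs.v *)
From Stdlib Require Import List Arith.
Import ListNotations.

(* A letter is a generator together with an exponent sign: (g, false) = g,
   (g, true) = g^{-1}. A word is a list of letters. *)
Definition word (G : Type) := list (G * bool).

Definition letter_inv {G : Type} (l : G * bool) : G * bool := (fst l, negb (snd l)).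

Definition word_inv {G : Type} (w : word G) : word G := rev (map letter_inv w).

Fixpoint word_pow {G : Type} (w : word G) (n : nat) : word G :=
  match n with
  | O => []
  | S k => w ++ word_pow w k
  end.

(* Two words are equal in the presented group iff pres_eq holds. *)
Inductive pres_eq {G : Type} (R : word G -> Prop) : word G -> word G -> Prop :=
  | pe_refl : forall w, pres_eq R w w
  | pe_sym : forall u v, pres_eq R u v -> pres_eq R v u
  | pe_trans : forall u v w, pres_eq R u v -> pres_eq R v w -> pres_eq R u w
  | pe_free : forall u v (g : G) (b : bool),
      pres_eq R (u ++ (g, b) :: (g, negb b) :: v) (u ++ v)
  | pe_rel : forall u v r, R r -> pres_eq R (u ++ r ++ v) (u ++ v).

Definition presented_torsion_free {G : Type} (R : word G -> Prop) : Prop :=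
  forall (w : word G) (n : nat), 1 <= n -> pres_eq R (word_pow w n) [] -> pres_eq R w [].

(* Generators of Q: the x_i (X k stands for x_{k+1}, k : nat), and a, b, t. *)
Inductive QGen : Type :=
  | QX : nat -> QGen
  | QA : QGen
  | QB : QGen
  | QT : QGen.

Definition qx (i : nat) : word QGen :=
  match i with
  | O => []
  | S k => [(QX k, false)]
  end.

Definition embedX (w : word nat) : word QGen := map (fun l => (QX (fst l), snd l)) w.

Definition gpow (g : QGen) (n : nat) : word QGen := word_pow [(g, false)] n.

Definition Q_rel_i (i : nat) : word QGen :=
  [(QT, true)] ++ qx i ++ word_inv (gpow QB i) ++ [(QA, false)] ++ gpow QB i ++ [(QT, false)]
  ++ word_inv (word_inv (gpow QA i) ++ [(QB, false)] ++ gpow QA i).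

Definition Q_rels (R : word nat -> Prop) (w : word QGen) : Prop :=
  (exists r, R r /\ w = embedX r) \/ (exists i, w = Q_rel_i i).

(* Main.v *)
Require Import Defs.
From Stdlib Require Import List Arith Lia ZArith Setoid Morphisms.
From Stdlib Require Import ClassicalEpsilon FunctionalExtensionality PropExtensionality Classical.
Import ListNotations.


Section Basics.
Context {G : Type}.

Lemma word_inv_app (u v : word G) : word_inv (u ++ v) = word_inv v ++ word_inv u.
Proof. unfold word_inv. rewrite map_app, rev_app_distr. reflexivity. Qed.

Lemma word_inv_inv (w : word G) : word_inv (word_inv w) = w.
Proof.
  unfold word_inv. rewrite map_rev, rev_involutive, map_map.
  rewrite <- (map_id w) at 2. apply map_ext. intros [a b]. unfold letter_inv; simpl.
  rewrite Bool.negb_involutive. reflexivity.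
Qed.

Lemma word_inv_cons (l : G * bool) (w : word G) : word_inv (l :: w) = word_inv w ++ [letter_inv l].
Proof. reflexivity. Qed.

Lemma word_inv_nil : word_inv (@nil (G*bool)) = [].
Proof. reflexivity. Qed.

Variable R : word G -> Prop.

Instance pe_equiv : Equivalence (pres_eq R).
Proof. split. intro; apply pe_refl. intros x y; apply pe_sym. intros x y z; apply pe_trans. Qed.

Lemma pe_cong (x y u v : word G) : pres_eq R u v -> pres_eq R (x ++ u ++ y) (x ++ v ++ y).
Proof.
  induction 1.
  - reflexivity.
  - symmetry; auto.
  - etransitivity; eauto.
  - replace (x ++ (u ++ (g, b) :: (g, negb b) :: v) ++ y) with ((x ++ u) ++ (g, b) :: (g, negb b) :: (v ++ y))
      by (rewrite <- !app_assoc; reflexivity).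
    replace (x ++ (u ++ v) ++ y) with ((x ++ u) ++ (v ++ y)) by (rewrite !app_assoc; reflexivity).
    apply pe_free.
  - replace (x ++ (u ++ r ++ v) ++ y) with ((x ++ u) ++ r ++ (v ++ y)) by (rewrite !app_assoc; reflexivity).
    replace (x ++ (u ++ v) ++ y) with ((x ++ u) ++ (v ++ y)) by (rewrite !app_assoc; reflexivity).
    apply pe_rel; auto.
Qed.

Instance app_proper : Proper (pres_eq R ==> pres_eq R ==> pres_eq R) (@app (G*bool)).
Proof.
  intros u u' Hu v v' Hv. transitivity (u' ++ v).
  - pose proof (pe_cong [] v u u' Hu). simpl in H. exact H.
  - pose proof (pe_cong u' [] v v' Hv). rewrite !app_nil_r in H. exact H.
Qed.

Instance cons_proper (l : G * bool) : Proper (pres_eq R ==> pres_eq R) (cons l).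
Proof. intros u v H. change (l :: u) with ([l] ++ u). change (l :: v) with ([l] ++ v). rewrite H. reflexivity. Qed.

Lemma inv_cancel_r (w : word G) : pres_eq R (w ++ word_inv w) [].
Proof.
  induction w as [|[g b] w IH]; simpl.
  - reflexivity.
  - rewrite word_inv_cons. unfold letter_inv; simpl.
    transitivity ((g,b) :: (g, negb b) :: []).
    + rewrite (app_assoc w). rewrite IH. reflexivity.
    + apply (pe_free R [] [] g b).
Qed.

Lemma inv_cancel_l (w : word G) : pres_eq R (word_inv w ++ w) [].
Proof. rewrite <- (word_inv_inv w) at 2. apply inv_cancel_r. Qed.

Lemma pe_eq_iff (u v : word G) : pres_eq R u v <-> pres_eq R (u ++ word_inv v) [].
Proof.
  split; intro H.
  - rewrite H. apply inv_cancel_r.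
  - transitivity ((u ++ word_inv v) ++ v).
    + rewrite <- app_assoc, inv_cancel_l, app_nil_r. reflexivity.
    + rewrite H. reflexivity.
Qed.

Instance inv_proper : Proper (pres_eq R ==> pres_eq R) (@word_inv G).
Proof.
  intros u v H. transitivity (word_inv u ++ v ++ word_inv v).
  - rewrite inv_cancel_r, app_nil_r. reflexivity.
  - rewrite <- H at 1. rewrite app_assoc, inv_cancel_l. reflexivity.
Qed.

Lemma triv_app (u v : word G) : pres_eq R u [] -> pres_eq R v [] -> pres_eq R (u ++ v) [].
Proof. intros H1 H2. rewrite H1, H2. reflexivity. Qed.

Instance pow_proper : Proper (pres_eq R ==> eq ==> pres_eq R) (@word_pow G).
Proof.
  intros u v H n m <-. induction n; simpl. reflexivity. apply app_proper; assumption.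
Qed.

Lemma pow_conj (c w : word G) n :
  pres_eq R (word_pow (word_inv c ++ w ++ c) n) (word_inv c ++ word_pow w n ++ c).
Proof.
  induction n; simpl.
  - symmetry. apply inv_cancel_l.
  - rewrite IHn. rewrite <- !app_assoc. rewrite (app_assoc c (word_inv c)), inv_cancel_r. reflexivity.
Qed.

Definition ptf (w : word G) := forall n, 1 <= n -> pres_eq R (word_pow w n) [] -> pres_eq R w [].

Lemma ptf_conj (c w w' : word G) : pres_eq R w' (word_inv c ++ w ++ c) -> ptf w' -> ptf w.
Proof.
  intros Hw H n Hn Hp. 
  assert (pres_eq R w' []).
  { apply (H n Hn). rewrite Hw, pow_conj, Hp. apply inv_cancel_l. }
  rewrite Hw in H0.
  transitivity (c ++ (word_inv c ++ w ++ c) ++ word_inv c).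
  - rewrite !app_assoc, inv_cancel_r. simpl. rewrite <- app_assoc, inv_cancel_r, app_nil_r. reflexivity.
  - rewrite H0. apply inv_cancel_r.
Qed.

Lemma ptf_eq (w w' : word G) : pres_eq R w' w -> ptf w' -> ptf w.
Proof. intro H. apply (ptf_conj []). simpl. rewrite app_nil_r. exact H. Qed.

End Basics.

Existing Instance pe_equiv.
Existing Instance app_proper.
Existing Instance cons_proper.
Existing Instance inv_proper.
Existing Instance pow_proper.

Section Subst.
Context {G H : Type}.

Definition subst (f : G -> word H) (w : word G) : word H :=
  flat_map (fun l : G * bool => if snd l then word_inv (f (fst l)) else f (fst l)) w.

Lemma subst_app f (u v : word G) : subst f (u ++ v) = subst f u ++ subst f v.
Proof. unfold subst. apply flat_map_app. Qed.

Lemma subst_cons f (l : G * bool) w : subst f (l :: w) = (if snd l then word_inv (f (fst l)) else f (fst l)) ++ subst f w.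
Proof. reflexivity. Qed.

Lemma subst_nil f : subst f [] = [].
Proof. reflexivity. Qed.

Lemma subst_inv f (w : word G) : subst f (word_inv w) = word_inv (subst f w).
Proof.
  induction w as [|[g b] w IH].
  - reflexivity.
  - rewrite word_inv_cons, subst_app, IH, (subst_cons f (g,b) w), word_inv_app. f_equal.
    unfold subst; simpl. rewrite app_nil_r. destruct b; simpl; rewrite ?word_inv_inv; reflexivity.
Qed.

Lemma subst_pow f (w : word G) n : subst f (word_pow w n) = word_pow (subst f w) n.
Proof. induction n; simpl. reflexivity. rewrite subst_app, IHn. reflexivity. Qed.

Lemma subst_ext f f' (w : word G) : (forall x, f x = f' x) -> subst f w = subst f' w.
Proof. intro E. unfold subst. apply flat_map_ext. intros [a b]; simpl. rewrite E; reflexivity. Qed.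

Lemma subst_ext_pe (R : word H -> Prop) f f' (w : word G) : (forall x, pres_eq R (f x) (f' x)) ->
  pres_eq R (subst f w) (subst f' w).
Proof.
  intro E. induction w as [|[a b] w IH]. reflexivity.
  rewrite !subst_cons, IH. simpl. destruct b; rewrite (E a); reflexivity.
Qed.

Lemma subst_resp (R1 : word G -> Prop) (R2 : word H -> Prop) f :
  (forall r, R1 r -> pres_eq R2 (subst f r) []) ->
  forall u v, pres_eq R1 u v -> pres_eq R2 (subst f u) (subst f v).
Proof.
  intros HR u v P. induction P.
  - reflexivity.
  - symmetry; auto.
  - etransitivity; eauto.
  - rewrite !subst_app, !subst_cons. simpl. 
    destruct b; simpl.
    + rewrite (app_assoc (word_inv (f g))), inv_cancel_l. reflexivity.
    + rewrite (app_assoc (f g)), inv_cancel_r. reflexivity.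
  - rewrite !subst_app, (HR r H0). reflexivity.
Qed.

Definition mapL (f : G -> H) (w : word G) : word H := map (fun l => (f (fst l), snd l)) w.

Lemma mapL_subst f (w : word G) : mapL f w = subst (fun x => [(f x, false)]) w.
Proof. induction w as [|[a b] w IH]. reflexivity. simpl. rewrite IH. destruct b; reflexivity. Qed.

Lemma mapL_app f (u v : word G) : mapL f (u ++ v) = mapL f u ++ mapL f v.
Proof. apply map_app. Qed.

Lemma mapL_inv f (w : word G) : mapL f (word_inv w) = word_inv (mapL f w).
Proof. rewrite !mapL_subst. apply subst_inv. Qed.

Lemma mapL_pow f (w : word G) n : mapL f (word_pow w n) = word_pow (mapL f w) n.
Proof. rewrite !mapL_subst. apply subst_pow. Qed.

End Subst.

Lemma subst_subst {A B C : Type} (f : B -> word C) (g : A -> word B) w :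
  subst f (subst g w) = subst (fun x => subst f (g x)) w.
Proof.
  induction w as [|[a b] w IH]. reflexivity.
  rewrite !subst_cons, subst_app, IH. simpl. destruct b; rewrite ?subst_inv; reflexivity.
Qed.

Lemma subst_id {A : Type} (w : word A) : subst (fun x => [(x,false)]) w = w.
Proof. induction w as [|[a b] w IH]. reflexivity. rewrite subst_cons, IH. destruct b; reflexivity. Qed.

Lemma mapL_mapL {A B C : Type} (f : B -> C) (g : A -> B) w : mapL f (mapL g w) = mapL (fun x => f (g x)) w.
Proof. unfold mapL. rewrite map_map. reflexivity. Qed.

Lemma conj_subst {A B : Type} (R : word B -> Prop) (T : word B) (f : A -> word B) s :
  pres_eq R (T ++ subst f s ++ word_inv T) (subst (fun i => T ++ f i ++ word_inv T) s).
Proof.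
  induction s as [|[a b] s IH].
  - rewrite !subst_nil. apply inv_cancel_r.
  - rewrite !subst_cons, <- IH. cbn [fst snd].
    transitivity (T ++ (if b then word_inv (f a) else f a) ++ (word_inv T ++ T) ++ subst f s ++ word_inv T).
    + rewrite inv_cancel_l. simpl. rewrite <- !app_assoc. reflexivity.
    + destruct b; rewrite ?word_inv_app, ?word_inv_inv; rewrite <- !app_assoc; reflexivity.
Qed.

Lemma tf_transfer {A B : Type} (R1 : word A -> Prop) (R2 : word B -> Prop) (f : A -> word B) (g : B -> word A) :
  (forall r, R1 r -> pres_eq R2 (subst f r) []) ->
  (forall r, R2 r -> pres_eq R1 (subst g r) []) ->
  (forall x, pres_eq R1 (subst g (f x)) [(x,false)]) ->
  presented_torsion_free R2 -> presented_torsion_free R1.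
Proof.
  intros H1 H2 H3 T w n Hn Hp.
  assert (E : pres_eq R2 (subst f w) []).
  { apply (T _ n Hn). rewrite <- subst_pow. apply (subst_resp R1 R2 f H1) in Hp. exact Hp. }
  apply (subst_resp R2 R1 g H2) in E. rewrite subst_subst in E.
  rewrite (subst_ext_pe R1 _ (fun x => [(x,false)])) in E by exact H3.
  rewrite subst_id in E. exact E.
Qed.

Section HNN.
Variables (G : Type) (R : word G -> Prop) (I : Type) (h k : I -> word G).
Hypothesis Hiso : forall s : word I, pres_eq R (subst h s) [] <-> pres_eq R (subst k s) [].

Local Notation "u == v" := (pres_eq R u v) (at level 70).

Definition HT (e : bool) : I -> word G := if e then h else k.
Definition KT (e : bool) : I -> word G := if e then k else h.

Lemma HT_neg e : HT (negb e) = KT e.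
Proof. destruct e; reflexivity. Qed.
Lemma KT_neg e : KT (negb e) = HT e.
Proof. destruct e; reflexivity. Qed.

Lemma Hiso_gen e s s' : subst (HT e) s == subst (HT e) s' <-> subst (KT e) s == subst (KT e) s'.
Proof.
  rewrite !(pe_eq_iff R (subst _ s)), <- !subst_inv, <- !subst_app.
  destruct e; simpl. apply Hiso. symmetry; apply Hiso.
Qed.

Definition Sg e w := exists s, w == subst (HT e) s.

Lemma S_resp e u v : u == v -> Sg e u -> Sg e v.
Proof. intros E [s Hs]. exists s. rewrite <- E. exact Hs. Qed.

Lemma S_nil e : Sg e [].
Proof. exists []. reflexivity. Qed.

Lemma S_app e u v : Sg e u -> Sg e v -> Sg e (u ++ v).
Proof. intros [s1 H1] [s2 H2]. exists (s1 ++ s2). rewrite subst_app, H1, H2. reflexivity. Qed.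

Lemma S_inv e u : Sg e u -> Sg e (word_inv u).
Proof. intros [s H1]. exists (word_inv s). rewrite subst_inv, H1. reflexivity. Qed.

Lemma S_gen e s : Sg e (subst (HT e) s).
Proof. exists s. reflexivity. Qed.

Lemma S_cancel e u v : Sg e u -> Sg e (u ++ v) -> Sg e v.
Proof.
  intros Hu Huv. apply (S_resp e (word_inv u ++ u ++ v)).
  - rewrite app_assoc, inv_cancel_l. reflexivity.
  - apply S_app; auto. apply S_inv; auto.
Qed.

Lemma S_cancel_r e u v : Sg e v -> Sg e (u ++ v) -> Sg e u.
Proof.
  intros Hv Huv. apply (S_resp e ((u ++ v) ++ word_inv v)).
  - rewrite <- app_assoc, inv_cancel_r, app_nil_r. reflexivity.
  - apply S_app; auto. apply S_inv; auto.
Qed.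

Definition ceq e u v := Sg e (u ++ word_inv v).

Lemma ceq_refl e u : ceq e u u.
Proof. unfold ceq. apply (S_resp e []). symmetry; apply inv_cancel_r. apply S_nil. Qed.

Lemma ceq_sym e u v : ceq e u v -> ceq e v u.
Proof. unfold ceq. intro H. apply S_inv in H. rewrite word_inv_app, word_inv_inv in H. exact H. Qed.

Lemma ceq_trans e u v w : ceq e u v -> ceq e v w -> ceq e u w.
Proof.
  unfold ceq. intros H1 H2. apply (S_resp e ((u ++ word_inv v) ++ (v ++ word_inv w))).
  - rewrite <- !app_assoc. rewrite (app_assoc (word_inv v)), inv_cancel_l. reflexivity.
  - apply S_app; auto.
Qed.

Lemma ceq_pe e u v : u == v -> ceq e u v.
Proof. intro E. unfold ceq. apply (S_resp e []). rewrite E. symmetry; apply inv_cancel_r. apply S_nil. Qed.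

Lemma ceq_S e u v : ceq e u v -> Sg e u -> Sg e v.
Proof.
  intros H Hu. apply ceq_sym in H. unfold ceq in H.
  apply (S_cancel_r e v (word_inv u)) in H. 2: apply S_inv; auto.
  exact H.
Qed.

Definition rep e g : word G := epsilon (inhabits []) (fun x => ceq e x g /\ (Sg e g -> x = [])).

Lemma rep_spec e g : ceq e (rep e g) g /\ (Sg e g -> rep e g = []).
Proof.
  unfold rep. apply epsilon_spec.
  destruct (classic (Sg e g)) as [Hs|Hs].
  - exists []. split; auto. unfold ceq. simpl. apply S_inv; auto.
  - exists g. split. apply ceq_refl. intro; contradiction.
Qed.

Lemma rep_nil_iff e g : rep e g = [] <-> Sg e g.
Proof.
  split.
  - intro E. destruct (rep_spec e g) as [H _]. rewrite E in H. apply (ceq_S e []). auto. apply S_nil.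
  - apply rep_spec.
Qed.

Lemma rep_ceq e g g' : ceq e g g' -> rep e g = rep e g'.
Proof.
  intro C. unfold rep. f_equal. apply functional_extensionality. intro x.
  apply propositional_extensionality. split.
  - intros [H1 H2]. split. eapply ceq_trans; eauto. intro Hs. apply H2. apply (ceq_S e g'); auto. apply ceq_sym; auto.
  - intros [H1 H2]. split. eapply ceq_trans; eauto. apply ceq_sym; auto.
    intro Hs. apply H2. apply (ceq_S e g); auto.
Qed.

Lemma rep_resp e g g' : g == g' -> rep e g = rep e g'.
Proof. intro; apply rep_ceq, ceq_pe; auto. Qed.

Lemma rep_mulS e x g : Sg e x -> rep e (x ++ g) = rep e g.
Proof.
  intro Hx. apply rep_ceq. unfold ceq. rewrite <- app_assoc.
  apply (S_resp e x). rewrite inv_cancel_r, app_nil_r. reflexivity. auto.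
Qed.

Lemma rep_rep e g : rep e (rep e g) = rep e g.
Proof. apply rep_ceq. apply rep_spec. Qed.

Lemma rep_ceq' e g : Sg e (g ++ word_inv (rep e g)).
Proof. apply ceq_sym. apply rep_spec. Qed.

Definition conv e w : word G := subst (KT e) (epsilon (inhabits []) (fun s => w == subst (HT e) s)).

Lemma conv_spec e w s : w == subst (HT e) s -> conv e w == subst (KT e) s.
Proof.
  intro Hs. unfold conv. apply Hiso_gen.
  assert (H := epsilon_spec (inhabits []) (fun s => w == subst (HT e) s) (ex_intro _ s Hs)).
  simpl in H. rewrite <- H. exact Hs.
Qed.

Lemma conv_resp e u v : u == v -> conv e u = conv e v.
Proof.
  intro E. unfold conv. f_equal. f_equal. apply functional_extensionality. intro x.
  apply propositional_extensionality. rewrite E. reflexivity.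
Qed.

Instance conv_proper e : Proper (pres_eq R ==> pres_eq R) (conv e).
Proof. intros u v E. rewrite (conv_resp e u v E). reflexivity. Qed.

Lemma conv_S e w : Sg (negb e) (conv e w).
Proof. unfold Sg, conv. rewrite HT_neg. eexists; reflexivity. Qed.

Lemma conv_app e u v : Sg e u -> Sg e v -> conv e (u ++ v) == conv e u ++ conv e v.
Proof.
  intros [s1 H1] [s2 H2]. rewrite (conv_spec e u s1 H1), (conv_spec e v s2 H2), <- subst_app.
  apply conv_spec. rewrite subst_app, H1, H2. reflexivity.
Qed.

Lemma conv_conv e w : Sg e w -> conv (negb e) (conv e w) == w.
Proof.
  intros [s Hs]. rewrite (conv_spec (negb e) (conv e w) s).
  - rewrite KT_neg. symmetry. exact Hs.
  - rewrite HT_neg. apply conv_spec. auto.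
Qed.

Definition mS (w : word G) : word (option G) := mapL Some w.

Definition RH (w : word (option G)) : Prop :=
  (exists r, R r /\ w = mS r) \/
  (exists i, w = [(None,true)] ++ mS (h i) ++ [(None,false)] ++ word_inv (mS (k i))).

Lemma mS_resp u v : u == v -> pres_eq RH (mS u) (mS v).
Proof.
  intro E. unfold mS. rewrite !mapL_subst. apply (subst_resp R RH); auto.
  intros r Hr. rewrite <- mapL_subst. pose proof (pe_rel RH [] [] (mS r)) as P. simpl in P. rewrite app_nil_r in P. apply P. left. exists r; auto.
Qed.

Lemma mS_app u v : mS (u ++ v) = mS u ++ mS v.
Proof. apply mapL_app. Qed.

Lemma mS_inv u : mS (word_inv u) = word_inv (mS u).
Proof. apply mapL_inv. Qed.

Definition st : Type := (word G * list (bool * word G))%type.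

Fixpoint nopinch (l : list (bool * word G)) : Prop :=
  match l with
  | (e, g) :: (((e', _) :: _) as l') => ~ (g = [] /\ e' = negb e) /\ nopinch l'
  | _ => True
  end.

Definition nf (x : st) : Prop := Forall (fun p => rep (fst p) (snd p) = snd p) (snd x) /\ nopinch (snd x).

Definition sim (x y : st) : Prop := fst x == fst y /\ snd x = snd y.

Lemma sim_refl x : sim x x.
Proof. split; reflexivity. Qed.
Lemma sim_sym x y : sim x y -> sim y x.
Proof. intros [H1 H2]; split; symmetry; auto. Qed.
Lemma sim_trans x y z : sim x y -> sim y z -> sim x z.
Proof. intros [H1 H2] [H3 H4]; split; etransitivity; eauto. Qed.

Definition act_t (e : bool) (x : st) : st :=
  let r := rep e (fst x) in
  let y := conv e (fst x ++ word_inv r) in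
  match snd x with
  | (e', g1) :: l' =>
      if excluded_middle_informative (r = [] /\ e' = negb e) then (y ++ g1, l')
      else (y, (e, r) :: snd x)
  | [] => (y, [(e, r)])
  end.

Definition act_letter (l : option G * bool) (x : st) : st :=
  match l with
  | (Some a, b) => ((a, b) :: fst x, snd x)
  | (None, e) => act_t e x
  end.

Definition act (w : word (option G)) (x : st) : st := fold_right act_letter x w.

Lemma act_app u v x : act (u ++ v) x = act u (act v x).
Proof. unfold act. apply fold_right_app. Qed.

Lemma act_mS g x : act (mS g) x = (g ++ fst x, snd x).
Proof.
  induction g as [|[a b] g IH]. destruct x; reflexivity.
  change (act (mS ((a,b)::g)) x) with (act_letter (Some a, b) (act (mS g) x)). rewrite IH. reflexivity.
Qed.

Lemma act_t_resp e g g' l : g == g' -> act_t e (g, l) = act_t e (g', l).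
Proof.
  intro E. unfold act_t; simpl. rewrite (rep_resp e g g' E).
  rewrite (conv_resp e (g ++ word_inv (rep e g')) (g' ++ word_inv (rep e g'))) by (rewrite E; reflexivity).
  reflexivity.
Qed.

Lemma act_letter_resp l x y : sim x y -> sim (act_letter l x) (act_letter l y).
Proof.
  destruct x as [g l1], y as [g' l2]. intros [E1 E2]; simpl in *; subst l2.
  destruct l as [[a|] b]; simpl.
  - split; simpl; auto. rewrite E1; reflexivity.
  - rewrite (act_t_resp b g g' l1 E1). apply sim_refl.
Qed.

Lemma act_resp w x y : sim x y -> sim (act w x) (act w y).
Proof. induction w; simpl; auto. intro H. apply act_letter_resp. auto. Qed.

Lemma act_t_nf e x : nf x -> nf (act_t e x).
Proof.
  destruct x as [g0 l]. intros [F N]. unfold act_t; simpl in *.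
  destruct l as [|[e' g1] l'].
  - split; simpl; auto. constructor; auto. simpl. apply rep_rep.
  - destruct excluded_middle_informative as [D|D].
    + split; simpl. inversion F; auto. destruct l' as [|[]]; simpl in *; tauto.
    + split; simpl. constructor; auto. simpl. apply rep_rep. split; auto.
Qed.

Lemma act_nf w x : nf x -> nf (act w x).
Proof.
  induction w as [|[[a|] b] w IH]; simpl; intro H; auto.
  all: try (apply act_t_nf; auto).
  all: try (destruct (IH H) as [F N]; split; auto).
Qed.

Lemma act_tt e x : nf x -> sim (act_t e (act_t (negb e) x)) x.
Proof.
  destruct x as [g0 l]. intros [F N].
  set (f := negb e).
  unfold act_t at 2; simpl.
  set (r := rep f g0). set (y := conv f (g0 ++ word_inv r)).
  assert (Sy : Sg e y). { unfold y. rewrite <- (Bool.negb_involutive e). apply conv_S. }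
  destruct l as [|[e1 g1] l'].
  -
    unfold act_t; simpl. rewrite (proj2 (rep_nil_iff e y) Sy).
    destruct excluded_middle_informative as [D|D].
    + split; simpl; auto. rewrite app_nil_r. 
      unfold y. unfold f. rewrite <- (Bool.negb_involutive e) at 1. rewrite conv_conv.
      rewrite <- app_assoc, inv_cancel_l, app_nil_r. reflexivity.
      apply rep_ceq'.
    + exfalso. apply D. split; auto.
  - destruct excluded_middle_informative as [D|D].
    +
      destruct D as [Dr De]. unfold f in De. rewrite Bool.negb_involutive in De. subst e1.
      inversion F as [|? ? F1 F2]; subst. simpl in F1.
      unfold act_t; simpl. rewrite (rep_mulS e y g1 Sy), F1.
      destruct l' as [|[e2 g2] l''].
      * split; simpl; auto.
        rewrite <- app_assoc, inv_cancel_r, app_nil_r. unfold y. unfold f.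
        rewrite <- (Bool.negb_involutive e) at 1. rewrite conv_conv. fold r. rewrite Dr. simpl. rewrite app_nil_r. reflexivity.
        fold f. fold r. rewrite Dr. simpl. rewrite app_nil_r. apply rep_nil_iff. auto.
      * destruct excluded_middle_informative as [D2|D2].
        { exfalso. simpl in N. destruct N as [N1 _]. apply N1. exact D2. }
        split; simpl; auto.
        rewrite <- app_assoc, inv_cancel_r, app_nil_r. unfold y. unfold f.
        rewrite <- (Bool.negb_involutive e) at 1. rewrite conv_conv. fold r. rewrite Dr. simpl. rewrite app_nil_r. reflexivity.
        fold f. fold r. rewrite Dr. simpl. rewrite app_nil_r. apply rep_nil_iff. auto.
    +
      unfold act_t; simpl. rewrite (proj2 (rep_nil_iff e y) Sy).
      destruct excluded_middle_informative as [D2|D2].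
      * split; simpl; auto. rewrite app_nil_r.
        unfold y. unfold f. rewrite <- (Bool.negb_involutive e) at 1. rewrite conv_conv.
        rewrite <- app_assoc, inv_cancel_l, app_nil_r. reflexivity.
        apply rep_ceq'.
      * exfalso. apply D2. split; auto.
Qed.

Lemma Sh i : Sg true (h i).
Proof. exists [(i,false)]. simpl. rewrite app_nil_r. reflexivity. Qed.
Lemma Sk i : Sg false (k i).
Proof. exists [(i,false)]. simpl. rewrite app_nil_r. reflexivity. Qed.

Lemma conv_h i : conv true (h i) == k i.
Proof.
  rewrite (conv_spec true (h i) [(i,false)]). simpl. rewrite app_nil_r. reflexivity.
  simpl. rewrite app_nil_r. reflexivity.
Qed.

Lemma key_hc i c w : Sg true c -> c == conv false w -> Sg false w -> conv true (h i ++ c) == k i ++ w.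
Proof.
  intros Sc Ec Sw. rewrite conv_app by (auto using Sh). rewrite conv_h, Ec.
  change true with (negb false). rewrite conv_conv by auto. reflexivity.
Qed.

Lemma act_rel_H i x : nf x ->
  sim (act ([(None,true)] ++ mS (h i) ++ [(None,false)] ++ word_inv (mS (k i))) x) x.
Proof.
  destruct x as [g0 l]. intros [F N].
  rewrite <- mS_inv, !act_app. rewrite (act_mS (word_inv (k i)) (g0,l)). simpl fst; simpl snd.
  set (g0' := word_inv (k i) ++ g0).
  change (act [(None,false)] (g0', l)) with (act_t false (g0', l)).
  unfold act_t. simpl fst; simpl snd.
  set (r := rep false g0'). set (c := conv false (g0' ++ word_inv r)).
  assert (Sc : Sg true c) by (apply (conv_S false)).
  assert (Sw : Sg false (g0' ++ word_inv r)) by (apply rep_ceq').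
  assert (Khc : conv true (h i ++ c) == k i ++ (g0' ++ word_inv r)) by (apply key_hc; auto; reflexivity).
  assert (Fin : k i ++ (g0' ++ word_inv r) ++ r == g0).
  { unfold g0'. rewrite <- !app_assoc, inv_cancel_l, app_nil_r, app_assoc, inv_cancel_r. reflexivity. }
  assert (PopCase : forall L, sim (act [(None,true)] (act (mS (h i)) (c, (false, r) :: L))) (g0, L)).
  { intro L. rewrite act_mS. simpl. unfold act_t. simpl fst; simpl snd.
    rewrite (proj2 (rep_nil_iff true (h i ++ c))) by (apply S_app; auto using Sh).
    destruct excluded_middle_informative as [D|D].
    - split; simpl; auto. rewrite app_nil_r, Khc, <- app_assoc. exact Fin.
    - exfalso. apply D; auto. }
  destruct l as [|[e1 g1] l'].
  - exact (PopCase []).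
  - destruct excluded_middle_informative as [D|D].
    + destruct D as [Dr De]. simpl in De. subst e1.
      inversion F as [|? ? F1 F2]; subst. simpl in F1.
      rewrite act_mS. simpl. unfold act_t. simpl fst; simpl snd.
      rewrite app_assoc, (rep_mulS true (h i ++ c) g1) by (apply S_app; auto using Sh). rewrite F1.
      assert (E : conv true (((h i ++ c) ++ g1) ++ word_inv g1) == g0).
      { rewrite <- app_assoc, inv_cancel_r, app_nil_r, Khc. rewrite <- Fin. rewrite Dr. simpl. rewrite !app_nil_r. reflexivity. }
      destruct l' as [|[e2 g2] l''].
      * split; simpl; auto.
      * destruct excluded_middle_informative as [D2|D2].
        { exfalso. simpl in N. destruct N as [N1 _]. apply N1. exact D2. }
        split; simpl; auto.
    + exact (PopCase _).
Qed.

Lemma act_rel x r : nf x -> RH r -> sim (act r x) x.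
Proof.
  intros Hx [[r' [Hr ->]] | [i ->]].
  - destruct x as [g0 l]. rewrite act_mS. split; simpl; auto.
    pose proof (pe_rel R [] g0 r' Hr) as P. simpl in P. rewrite P. reflexivity.
  - apply act_rel_H; auto.
Qed.

Lemma act_pe u v : pres_eq RH u v -> forall x, nf x -> sim (act u x) (act v x).
Proof.
  induction 1; intros x Hx.
  - apply sim_refl.
  - apply sim_sym; auto.
  - eapply sim_trans; eauto.
  - rewrite !act_app. apply act_resp.
    change (act ((g, b) :: (g, negb b) :: v) x) with (act_letter (g,b) (act_letter (g, negb b) (act v x))).
    assert (Hy := act_nf v x Hx). destruct (act v x) as [g0 l].
    destruct g as [a|]; simpl.
    + split; simpl; auto. apply (pe_free R [] g0 a b).
    + apply act_tt; auto.
  - rewrite !act_app. apply act_resp. apply act_rel; auto. apply act_nf; auto.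
Qed.

Lemma nf_base : nf ([], []).
Proof. split; simpl; auto. Qed.

Theorem HNN_embed w : pres_eq RH (mS w) [] -> w == [].
Proof.
  intro H. destruct (act_pe _ _ H ([],[]) nf_base) as [E _]. rewrite act_mS in E. simpl in E.
  rewrite app_nil_r in E. exact E.
Qed.

Definition FM (l : list (bool * word G)) : word (option G) := flat_map (fun p => (None, fst p) :: mS (snd p)) l.

Definition pinch (a b : bool * word G) : Prop := fst b = negb (fst a) /\ Sg (fst a) (snd a).

Fixpoint red (l : list (bool * word G)) : Prop :=
  match l with
  | a :: ((b :: _) as l') => ~ pinch a b /\ red l'
  | _ => True
  end.

Lemma britton l : forall e g, red ((e,g)::l) ->
  exists y r l4, act (FM ((e,g)::l)) ([],[]) = (y, (e,r)::l4) /\ Sg (negb e) y.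
Proof.
  induction l as [|[e2 g2] l IH]; intros e g Hr.
  - simpl. rewrite app_nil_r. change (act (mS g) ([],[])) with (act (mS g) ([],[])).
    rewrite act_mS. simpl. do 3 eexists. split. reflexivity. apply conv_S.
  - destruct Hr as [Hp Hr]. destruct (IH e2 g2 Hr) as [y [r [l4 [E Sy]]]].
    change (FM ((e, g) :: (e2, g2) :: l)) with ((None,e) :: mS g ++ FM ((e2,g2)::l)).
    change (act ((None, e) :: mS g ++ FM ((e2, g2) :: l)) ([], [])) with (act_t e (act (mS g ++ FM ((e2, g2) :: l)) ([], []))).
    rewrite act_app, E, act_mS. unfold act_t. simpl.
    destruct excluded_middle_informative as [D|D].
    + exfalso. apply Hp. destruct D as [D1 D2]. split; simpl; auto. subst e2.
      apply rep_nil_iff in D1. rewrite Bool.negb_involutive in Sy. apply (S_cancel_r e g y); auto.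
    + do 3 eexists. split. reflexivity. apply conv_S.
Qed.

Fixpoint tc (w : word (option G)) : nat :=
  match w with
  | [] => 0
  | (None, _) :: w' => Datatypes.S (tc w')
  | (Some _, _) :: w' => tc w'
  end.

Lemma tc_app u v : tc (u ++ v) = tc u + tc v.
Proof. induction u as [|[[a|] b] u IH]; simpl; auto. Qed.

Lemma tc_mS g : tc (mS g) = 0.
Proof. induction g as [|[a b] g IH]; simpl; auto. Qed.

Lemma tc_FM l : tc (FM l) = length l.
Proof. induction l as [|[e g] l IH]; simpl; auto. rewrite tc_app, tc_mS, <- IH. reflexivity. Qed.

Lemma FM_app l1 l2 : FM (l1 ++ l2) = FM l1 ++ FM l2.
Proof. apply flat_map_app. Qed.

Lemma parse w : exists g0 l, w = mS g0 ++ FM l.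
Proof.
  induction w as [|[[a|] b] w IH].
  - exists [], []. reflexivity.
  - destruct IH as [g0 [l ->]]. exists ((a,b)::g0), l. reflexivity.
  - destruct IH as [g0 [l ->]]. exists [], ((b,g0)::l). reflexivity.
Qed.

Lemma mS_subst (f : I -> word G) s : mS (subst f s) = subst (fun i => mS (f i)) s.
Proof. unfold mS. rewrite mapL_subst, subst_subst. apply subst_ext. intro; rewrite mapL_subst; reflexivity. Qed.

Lemma rel_true i : pres_eq RH ([(None,true)] ++ mS (h i) ++ [(None,false)]) (mS (k i)).
Proof.
  apply pe_eq_iff. rewrite <- !app_assoc.
  pose proof (pe_rel RH [] [] ([(None,true)] ++ mS (h i) ++ [(None,false)] ++ word_inv (mS (k i)))) as P.
  simpl in P. rewrite app_nil_r in P. simpl. apply P. right. exists i. reflexivity.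
Qed.

Lemma tt_cancel (e : bool) : pres_eq RH [(None,e);(None,negb e)] [].
Proof. apply (pe_free RH [] [] None e). Qed.

Lemma tt_ft : pres_eq RH [(None,false);(None,true)] [].
Proof. apply (tt_cancel false). Qed.

Lemma rel_gen e i : pres_eq RH ([(None,e)] ++ mS (HT e i) ++ [(None,negb e)]) (mS (KT e i)).
Proof.
  destruct e; simpl.
  - apply rel_true.
  - rewrite <- rel_true. simpl.
    transitivity ([(None,false);(None,true)] ++ mS (h i) ++ [(None,false);(None,true)]).
    + simpl. rewrite <- !app_assoc. reflexivity.
    + rewrite tt_ft. simpl. rewrite app_nil_r. reflexivity.
Qed.

Lemma pinch_lemma e g : Sg e g -> pres_eq RH ((None,e) :: mS g ++ [(None, negb e)]) (mS (conv e g)).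
Proof.
  intros [s Hs]. rewrite (mS_resp _ _ (conv_spec e g s Hs)).
  rewrite (mS_resp _ _ Hs). rewrite !mS_subst.
  change ((None, e) :: subst (fun i => mS (HT e i)) s ++ [(None, negb e)]) with
    ([(None,e)] ++ subst (fun i => mS (HT e i)) s ++ word_inv [(None,e)]).
  rewrite conj_subst. apply subst_ext_pe. intro i. apply rel_gen.
Qed.

Lemma not_red l : ~ red l -> exists l1 a b l2, l = l1 ++ a :: b :: l2 /\ pinch a b.
Proof.
  induction l as [|a l IH]; simpl.
  - tauto.
  - destruct l as [|b l'].
    + tauto.
    + intro H. destruct (classic (pinch a b)) as [P|P].
      * exists [], a, b, l'. auto.
      * destruct IH as [l1 [a' [b' [l2 [E P']]]]]. tauto.
        exists (a :: l1), a', b', l2. rewrite E. auto.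
Qed.

Lemma red_last lz e g g' : red (lz ++ [(e,g)]) -> red (lz ++ [(e,g')]).
Proof.
  induction lz as [|a lz IH]; simpl; auto.
  destruct lz as [|b lz]; simpl in *; auto.
  intros [H1 H2]. split; auto. apply IH; exact H2.
Qed.

Lemma red_app L0 a b M : red (L0 ++ [a]) -> red (b :: M) -> ~ pinch a b -> red (L0 ++ a :: b :: M).
Proof.
  induction L0 as [|x L0 IH]; simpl; auto.
  destruct L0 as [|y L0]; simpl in *.
  - intros [H1 _] H2 H3. auto.
  - intros [H1 H2] H3 H4. split; auto. apply IH; auto.
Qed.

Fixpoint lpow (L : list (bool * word G)) (n : nat) : list (bool * word G) :=
  match n with 0 => [] | Datatypes.S n' => L ++ lpow L n' end.

Lemma FM_lpow L n : word_pow (FM L) n = FM (lpow L n).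
Proof. induction n; simpl; auto. rewrite FM_app, IHn. reflexivity. Qed.

Lemma red_lpow L0 a b L1 : L0 ++ [a] = b :: L1 -> red (b :: L1) -> ~ pinch a b ->
  forall n, exists M, lpow (b :: L1) (Datatypes.S n) = b :: M /\ red (b :: M).
Proof.
  intros EL Hr Hp n. induction n as [|n IH].
  - exists (L1 ++ []). simpl. rewrite app_nil_r. auto.
  - destruct IH as [M [E1 E2]]. exists (L1 ++ b :: M). split.
    + change (lpow (b :: L1) (Datatypes.S (Datatypes.S n))) with ((b :: L1) ++ lpow (b :: L1) (Datatypes.S n)).
      rewrite E1. reflexivity.
    + change (b :: L1 ++ b :: M) with ((b :: L1) ++ b :: M). rewrite <- EL, <- app_assoc. simpl.
      apply red_app; auto. rewrite EL. auto.
Qed.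

Lemma cyc_ok L0 a b L1 : L0 ++ [a] = b :: L1 -> red (b :: L1) -> ~ pinch a b -> ptf RH (FM (b :: L1)).
Proof.
  intros EL Hr Hp n Hn HP. exfalso. destruct n as [|n']. lia.
  rewrite FM_lpow in HP. destruct (red_lpow L0 a b L1 EL Hr Hp n') as [M [E1 E2]].
  rewrite E1 in HP. destruct b as [e g]. destruct (britton M e g E2) as [y [r [l4 [Ea _]]]].
  destruct (act_pe _ _ HP ([],[]) nf_base) as [_ Es]. rewrite Ea in Es. simpl in Es. discriminate.
Qed.

Theorem HNN_tf : presented_torsion_free R -> presented_torsion_free RH.
Proof.
  intros TF.
  assert (Main : forall m w, tc w = m -> ptf RH w).
  { intro m. induction m as [m IH] using lt_wf_ind. intros w Hm.
    destruct (parse w) as [g0 [l ->]].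
    rewrite tc_app, tc_mS, tc_FM in Hm. simpl in Hm.
    destruct (classic (red l)) as [Hr|Hr].
    2: { destruct (not_red l Hr) as [l1 [[e g] [[e' g'] [l2 [El [Pe Ps]]]]]]. simpl in Pe, Ps. subst e' l.
         apply (ptf_eq RH _ (mS g0 ++ FM l1 ++ mS (conv e g) ++ mS g' ++ FM l2)).
         - symmetry. rewrite FM_app.
           change (FM ((e,g)::(negb e,g')::l2)) with ((None,e) :: mS g ++ (None,negb e) :: mS g' ++ FM l2).
           apply app_proper; [reflexivity|]. apply app_proper; [reflexivity|].
           rewrite <- (pinch_lemma e g Ps). simpl. rewrite <- app_assoc. simpl. reflexivity.
         - apply (IH (length l1 + length l2)).
           + rewrite length_app in Hm. simpl in Hm. lia.
           + rewrite !tc_app, !tc_mS, !tc_FM. lia. }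
    destruct l as [|b L1].
    - intros n Hn Hp. simpl in Hp |- *. rewrite app_nil_r in Hp |- *.
      unfold mS in Hp. rewrite <- mapL_pow in Hp. apply HNN_embed in Hp.
      apply TF in Hp; auto. rewrite (mS_resp _ _ Hp). reflexivity.
    - destruct (@exists_last _ (b::L1) ltac:(discriminate)) as [lz [[ek gk] El]].
      set (L := lz ++ [(ek, gk ++ g0)]).
      apply (ptf_conj RH (mS g0) _ (FM L)).
      { transitivity (FM (b::L1) ++ mS g0).
        - rewrite El. unfold L. rewrite !FM_app. simpl. rewrite !app_nil_r, mS_app, <- !app_assoc. reflexivity.
        - rewrite <- (app_assoc (mS g0)), app_assoc, inv_cancel_l. reflexivity. }
      assert (HrL : red L) by (unfold L; apply (red_last lz ek gk); rewrite <- El; exact Hr).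
      destruct lz as [|b0 mid].
      + unfold L in *. simpl. apply (cyc_ok [] (ek, gk ++ g0) (ek, gk ++ g0) []); auto.
        intros [P _]. simpl in P. destruct ek; discriminate.
      + destruct (classic (pinch (ek, gk ++ g0) b0)) as [Pc|Pc].
        * destruct b0 as [e1 g1]. destruct Pc as [Pe Ps]. simpl in Pe, Ps. subst e1.
          apply (ptf_conj RH [(None, negb ek)] _ (mS g1 ++ FM mid ++ mS (conv ek (gk ++ g0)))).
          -- symmetry. unfold L. change (word_inv [(@None G, negb ek)]) with [(@None G, negb (negb ek))].
             rewrite Bool.negb_involutive.
             transitivity ([(None, ek); (None, negb ek)] ++ (mS g1 ++ FM mid) ++ ((None,ek) :: mS (gk ++ g0) ++ [(None, negb ek)])).
             ++ change (FM ((negb ek, g1) :: mid ++ [(ek, gk ++ g0)])) with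
                  ((None, negb ek) :: mS g1 ++ FM (mid ++ [(ek, gk ++ g0)])).
                rewrite FM_app. simpl. rewrite !app_nil_r. rewrite <- !app_assoc. simpl. reflexivity.
             ++ rewrite tt_cancel. simpl. rewrite (pinch_lemma ek _ Ps). rewrite <- app_assoc. reflexivity.
          -- apply (IH (length mid)).
             ++ apply (f_equal (@length _)) in El. simpl in El. rewrite length_app in El. simpl in El, Hm. lia.
             ++ rewrite !tc_app, !tc_mS, !tc_FM. lia.
        * unfold L. simpl. apply (cyc_ok (b0 :: mid) (ek, gk ++ g0) b0 (mid ++ [(ek, gk ++ g0)])); auto. }
  intros w n Hn Hp. apply (Main (tc w) w eq_refl n Hn Hp).
Qed.

Theorem HNN_tf_back : presented_torsion_free RH -> presented_torsion_free R.
Proof.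
  intros T w n Hn Hp. apply HNN_embed. apply (T _ n Hn).
  unfold mS. rewrite <- mapL_pow. apply (mS_resp _ _ Hp).
Qed.

End HNN.

Definition h0 {A : Type} (e : Empty_set) : word A := match e with end.

Lemma Hiso_empty {A : Type} (R : word A -> Prop) :
  forall s : word Empty_set, pres_eq R (subst h0 s) [] <-> pres_eq R (subst h0 s) [].
Proof. tauto. Qed.

Lemma HNN_tf_iff G (R : word G -> Prop) I (h k : I -> word G) :
  (forall s : word I, pres_eq R (subst h s) [] <-> pres_eq R (subst k s) []) ->
  (presented_torsion_free (RH G R I h k) <-> presented_torsion_free R).
Proof. intro H. split. apply HNN_tf_back; auto. apply HNN_tf; auto. Qed.

Definition B2 := option (option nat).
Definition XA : B2 := Some None.
Definition XB : B2 := None.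
Definition qx' (i : nat) : word B2 := match i with O => [] | S j => [(Some (Some j), false)] end.
Definition gp {A : Type} (y : A) (n : nat) : word A := word_pow [(y,false)] n.
Definition hh (i : nat) : word B2 := qx' i ++ word_inv (gp XB i) ++ [(XA,false)] ++ gp XB i.
Definition kk (i : nat) : word B2 := word_inv (gp XA i) ++ [(XB,false)] ++ gp XA i.

Section App.
Variable R : word nat -> Prop.

Definition R1 := RH nat R Empty_set h0 h0.
Definition R2 := RH (option nat) R1 Empty_set h0 h0.

Lemma R2_inv r : R2 r -> exists r0, R r0 /\ r = mS _ (mS _ r0).
Proof.
  intros [[r' [H1 ->]] | [[] _]]. destruct H1 as [[r0 [H0 ->]] | [[] _]]. eauto.
Qed.

Definition theta (y : B2) : word B2 :=
  match y with None => [(XA,false)] | Some None => [(XB,false)] | Some (Some _) => [] end.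

Lemma theta_mS r0 : subst theta (mS _ (mS _ r0)) = [].
Proof. induction r0 as [|[a b] r0 IH]. reflexivity. simpl. destruct b; simpl; exact IH. Qed.

Lemma subst_gp {A B : Type} (f : A -> word B) y n : subst f (gp y n) = word_pow (f y ++ []) n.
Proof. unfold gp. rewrite subst_pow. reflexivity. Qed.

Lemma theta_hh i : subst theta (hh i) = kk i.
Proof.
  unfold hh, kk. rewrite !subst_app, subst_inv, !subst_gp. simpl.
  destruct i; reflexivity.
Qed.

Fixpoint dl (c : Z) (w : word B2) : word Z * Z :=
  match w with
  | [] => ([], c)
  | (y, b) :: w' =>
      match y with
      | Some None => dl (if b then (c - 1)%Z else (c + 1)%Z) w'
      | None => ((c, b) :: fst (dl c w'), snd (dl c w'))
      | Some (Some _) => dl c w'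
      end
  end.

Lemma dl_app c u v : dl c (u ++ v) = (fst (dl c u) ++ fst (dl (snd (dl c u)) v), snd (dl (snd (dl c u)) v)).
Proof.
  revert c. induction u as [|[[[j|]|] b] u IH]; intro c; simpl; auto.
  - destruct (dl c v); reflexivity.
  - rewrite IH. reflexivity.
Qed.

Lemma dl_mS c r0 : dl c (mS _ (mS _ r0)) = ([], c).
Proof. induction r0 as [|[a b] r0 IH]. reflexivity. simpl. exact IH. Qed.

Definition Rnone {A : Type} (w : word A) : Prop := False.

Lemma dl_resp u v : pres_eq R2 u v -> forall c, pres_eq Rnone (fst (dl c u)) (fst (dl c v)) /\ snd (dl c u) = snd (dl c v).
Proof.
  induction 1; intro c.
  - split; reflexivity.
  - destruct (IHpres_eq c); split; symmetry; auto.
  - destruct (IHpres_eq1 c), (IHpres_eq2 c); split; etransitivity; eauto.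
  - rewrite !dl_app. set (c1 := snd (dl c u)).
    destruct g as [[j|]|]; simpl.
    + split; reflexivity.
    + replace ((if negb b then ((if b then (c1 - 1) else (c1 + 1)) - 1) else ((if b then (c1 - 1) else (c1 + 1)) + 1))%Z) with c1
        by (destruct b; simpl; lia).
      split; reflexivity.
    + split; [|reflexivity]. apply app_proper. reflexivity. apply (pe_free Rnone [] _ c1 b).
  - destruct (R2_inv r H) as [r0 [_ ->]]. rewrite !dl_app, dl_mS. simpl. split; reflexivity.
Qed.

Lemma gp_S {A : Type} (y : A) n : word_inv (gp y (S n)) = word_inv (gp y n) ++ [(y,true)].
Proof. unfold gp. change (word_pow [(y,false)] (S n)) with ([(y,false)] ++ word_pow [(y,false)] n). rewrite word_inv_app. reflexivity. Qed.

Lemma dl_gpA c n : dl c (gp XA n) = ([], (c + Z.of_nat n)%Z).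
Proof.
  revert c. induction n; intro c; simpl. f_equal; lia.
  unfold gp in IHn. rewrite IHn. f_equal. lia.
Qed.

Lemma dl_gpA_inv c n : dl c (word_inv (gp XA n)) = ([], (c - Z.of_nat n)%Z).
Proof.
  revert c. induction n; intro c. simpl. f_equal; lia.
  rewrite gp_S, dl_app, IHn. simpl. f_equal. lia.
Qed.

Lemma dl_kk c i : dl c (kk i) = ([((c - Z.of_nat i)%Z, false)], c).
Proof.
  unfold kk. rewrite dl_app, dl_gpA_inv. simpl. rewrite dl_gpA. simpl. f_equal. lia.
Qed.

Lemma dl_kk_inv c i : dl c (word_inv (kk i)) = ([((c - Z.of_nat i)%Z, true)], c).
Proof.
  unfold kk. rewrite !word_inv_app, word_inv_inv, <- app_assoc, dl_app, dl_gpA_inv. simpl. rewrite dl_gpA. simpl. f_equal. lia.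
Qed.

Lemma dl_subst_kk c s : dl c (subst kk s) = (mapL (fun i => (c - Z.of_nat i)%Z) s, c).
Proof.
  induction s as [|[i b] s IH]. reflexivity.
  rewrite subst_cons, dl_app. simpl fst; simpl snd. destruct b.
  - rewrite dl_kk_inv. simpl. rewrite IH. reflexivity.
  - rewrite dl_kk. simpl. rewrite IH. reflexivity.
Qed.

Lemma mapL_id {A : Type} (f : A -> A) s : (forall x, f x = x) -> mapL f s = s.
Proof. intro E. induction s as [|[a b] s IH]. reflexivity. simpl. rewrite E, IH. reflexivity. Qed.

Lemma Hiso3 : forall s : word nat, pres_eq R2 (subst hh s) [] <-> pres_eq R2 (subst kk s) [].
Proof.
  intro s. split; intro H.
  - apply (subst_resp R2 R2 theta) in H.
    + rewrite subst_subst in H. rewrite (subst_ext _ kk) in H by apply theta_hh. exact H.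
    + intros r Hr. destruct (R2_inv r Hr) as [r0 [_ ->]]. rewrite theta_mS. reflexivity.
  - destruct (dl_resp _ _ H 0%Z) as [E _]. rewrite dl_subst_kk in E. simpl in E.
    apply (subst_resp Rnone Rnone (fun z => [(Z.to_nat (- z), false)])) in E.
    2: { intros r []. }
    rewrite <- mapL_subst, mapL_mapL, mapL_id in E by (intro; lia). simpl in E.
    apply (subst_resp Rnone R2 hh) in E. exact E. intros r [].
Qed.

Definition R3 := RH B2 R2 nat hh kk.

Lemma tf_R3 : presented_torsion_free R3 <-> presented_torsion_free R.
Proof.
  unfold R3. rewrite (HNN_tf_iff B2 R2 nat hh kk Hiso3).
  unfold R2. rewrite (HNN_tf_iff (option nat) R1 Empty_set h0 h0 (Hiso_empty _)).
  unfold R1. rewrite (HNN_tf_iff nat R Empty_set h0 h0 (Hiso_empty _)).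
  reflexivity.
Qed.

Definition zeta (x : QGen) : option B2 :=
  match x with QX j => Some (Some (Some j)) | QA => Some XA | QB => Some XB | QT => None end.
Definition eta (y : option B2) : QGen :=
  match y with Some (Some (Some j)) => QX j | Some (Some None) => QA | Some None => QB | None => QT end.

Lemma eta_zeta x : eta (zeta x) = x.
Proof. destruct x; reflexivity. Qed.
Lemma zeta_eta y : zeta (eta y) = y.
Proof. destruct y as [[[j|]|]|]; reflexivity. Qed.

Lemma E1 r0 : mapL zeta (embedX r0) = mS _ (mS _ (mS _ r0)).
Proof. induction r0 as [|[a b] r0 IH]. reflexivity. simpl. f_equal. exact IH. Qed.

Lemma E2 i : mapL zeta (Q_rel_i i) =
  [(None,true)] ++ mS _ (hh i) ++ [(None,false)] ++ word_inv (mS _ (kk i)).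
Proof.
  unfold Q_rel_i, hh, kk, mS, gpow, gp. rewrite !mapL_app, !mapL_inv, !mapL_pow, !mapL_app, !mapL_inv, !mapL_pow.
  simpl. rewrite <- !app_assoc. f_equal. destruct i; reflexivity.
Qed.

Lemma R3_rel r : R3 r -> exists q, Q_rels R q /\ r = mapL zeta q.
Proof.
  intros [[r' [H1 ->]] | [i ->]].
  - destruct (R2_inv r' H1) as [r0 [H0 ->]]. exists (embedX r0). split. left; eauto. rewrite E1; reflexivity.
  - exists (Q_rel_i i). split. right; eauto. rewrite E2. reflexivity.
Qed.

Lemma single_rel {A : Type} (RR : word A -> Prop) r : RR r -> pres_eq RR r [].
Proof. intro H. pose proof (pe_rel RR [] [] r H) as P. simpl in P. rewrite app_nil_r in P. exact P. Qed.

Lemma Q_rel_R3 q : Q_rels R q -> R3 (mapL zeta q).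
Proof.
  intros [[r0 [H0 ->]] | [i ->]].
  - left. exists (mS _ (mS _ r0)). split.
    + left. exists (mS _ r0). split; [|reflexivity]. left. exists r0. auto.
    + apply E1.
  - right. exists i. apply E2.
Qed.

Lemma tf_Q_R3 : presented_torsion_free (Q_rels R) <-> presented_torsion_free R3.
Proof.
  split; intro T.
  - apply (tf_transfer R3 (Q_rels R) (fun y => [(eta y, false)]) (fun x => [(zeta x,false)])); auto.
    + intros r Hr. destruct (R3_rel r Hr) as [q [Hq ->]]. rewrite <- mapL_subst, mapL_mapL, mapL_id by apply eta_zeta.
      apply single_rel; auto.
    + intros r Hr. rewrite <- mapL_subst. apply single_rel. apply Q_rel_R3; auto.
    + intro x. simpl. rewrite zeta_eta. reflexivity.
  - apply (tf_transfer (Q_rels R) R3 (fun x => [(zeta x,false)]) (fun y => [(eta y, false)])); auto.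
    + intros r Hr. rewrite <- mapL_subst. apply single_rel. apply Q_rel_R3; auto.
    + intros r Hr. destruct (R3_rel r Hr) as [q [Hq ->]]. rewrite <- mapL_subst, mapL_mapL, mapL_id by apply eta_zeta.
      apply single_rel; auto.
    + intro x. simpl. rewrite eta_zeta. reflexivity.
Qed.

End App.

Theorem lemma5p8 (R : word nat -> Prop) :
  presented_torsion_free (Q_rels R) <-> presented_torsion_free R.
Proof. rewrite tf_Q_R3. apply tf_R3. Qed.
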